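(* In the standing setting below, let $X_i=(x_i,u_i)\in\mathbb{X}\times\mathbb{R}$ for $i=0,1$, and set $u_i'=F_{X_0X_1}(x_i)$ and $X_i'=(x_i,u_i')$ for $i=0,1$. Then $F_{X_0X_1}=F_{X_0'X_1'}$ on $\mathbb{X}$.
   Context: Standing setting: $\mathbb{X},\mathbb{Y}\subset\mathbb{R}^n$ are compact with non-empty interior; $c:\mathbb{X}\times\mathbb{Y}\to\mathbb{R}$ has continuous $D_xc$, $D_yc$, and continuous mixed second derivatives with $D^2_{xy}c=(D^2_{yx}c)^T$; for each $x$ the map $y\mapsto -D_xc(x,y)$ is injective on $\mathbb{Y}$ and for each $y$ the map $x\mapsto -D_yc(x,y)$ is injective on $\mathbb{X}$; $D^2_{xy}c(x,y)$ is invertible everywhere; for every $y$ the set $\{-D_yc(x,y):x\in\mathbb{X}\}$ is convex and for every $x$ the set $\{-D_xc(x,y):y\in\mathbb{Y}\}$ is convex. $c$-chord: for $X_i=(x_i,u_i)\in\mathbb{X}\times\mathbb{R}$, $F_{X_0X_1}(x)=\sup\{-c(x,y)+h: y\in\mathbb{Y},h\in\mathbb{R},-c(x_i,y)+h\le u_i, i=0,1\}$. *)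

(* Defs.v *)
From HB Require Import structures.
From mathcomp Require Import all_boot all_order all_algebra.
From mathcomp Require Import all_classical all_reals all_analysis.
Set Implicit Arguments. Unset Strict Implicit. Unset Printing Implicit Defensive.
Import Order.TTheory GRing.Theory Num.Theory.
Import numFieldNormedType.Exports.
Local Open Scope classical_set_scope.
Local Open Scope ring_scope.

Section Defs.
Variables (R : realType) (n : nat).
Notation V := 'rV[R]_n.

Definition evec (i : 'I_n) : V := delta_mx 0 i.

Definition Dxc (c : V -> V -> R) (x y : V) : V :=
  \row_i 'D_(evec i) (fun x' => c x' y) x.
Definition Dyc (c : V -> V -> R) (x y : V) : V :=
  \row_i 'D_(evec i) (fun y' => c x y') y.
Definition D2xyc (c : V -> V -> R) (x y : V) : 'M[R]_n :=
  \matrix_(i, j) 'D_(evec j) (fun y' => 'D_(evec i) (fun x' => c x' y') x) y.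
Definition D2yxc (c : V -> V -> R) (x y : V) : 'M[R]_n :=
  \matrix_(i, j) 'D_(evec j) (fun x' => 'D_(evec i) (fun y' => c x' y') y) x.

Definition convex_set_rV (A : set V) : Prop :=
  forall a b t, A a -> A b -> 0 <= t -> t <= 1 -> A (t *: a + (1 - t) *: b).

Definition standing_setting (X Y : set V) (c : V -> V -> R) : Prop :=
  [/\ compact X, compact Y, (X°) !=set0 & (Y°) !=set0] /\
  [/\
   (forall x y i, X x -> Y y ->
      derivable (fun x' => c x' y) x (evec i) /\
      derivable (fun y' => c x y') y (evec i)),
   {within X `*` Y, continuous (fun p : V * V => Dxc c p.1 p.2)} &
   {within X `*` Y, continuous (fun p : V * V => Dyc c p.1 p.2)}] /\
   [/\ (forall x y i j, X x -> Y y ->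
          derivable (fun y' => 'D_(evec i) (fun x' => c x' y') x) y (evec j) /\
          derivable (fun x' => 'D_(evec i) (fun y' => c x' y') y) x (evec j)),
       {within X `*` Y, continuous (fun p : V * V => D2xyc c p.1 p.2)},
       {within X `*` Y, continuous (fun p : V * V => D2yxc c p.1 p.2)} &
       (forall x y, X x -> Y y -> D2xyc c x y = (D2yxc c x y)^T)] /\
   [/\
       (forall x, X x -> {in Y &, injective (fun y => - Dxc c x y)}),
       (forall y, Y y -> {in X &, injective (fun x => - Dyc c x y)}),
       (forall x y, X x -> Y y -> D2xyc c x y \in unitmx),
       (forall y, Y y -> convex_set_rV [set - Dyc c x y | x in X]) &
       (forall x, X x -> convex_set_rV [set - Dxc c x y | y in Y])].

Definition cchord (Y : set V) (c : V -> V -> R) (X0 X1 : V * R) (x : V) : R :=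
  sup [set z | exists y h, [/\ Y y, - c X0.1 y + h <= X0.2,
                               - c X1.1 y + h <= X1.2 & z = - c x y + h]].

End Defs.

(* Main.v *)
Require Import Defs.
From HB Require Import structures.
From mathcomp Require Import all_boot all_order all_algebra.
From mathcomp Require Import all_classical all_reals all_analysis.
Import Order.TTheory GRing.Theory Num.Theory.
Local Open Scope classical_set_scope.
Local Open Scope ring_scope.

Theorem lemma3p5 (R : realType) (n : nat) (X Y : set 'rV[R]_n)
  (c : 'rV[R]_n -> 'rV[R]_n -> R) :
  standing_setting X Y c ->
  forall (x0 x1 : 'rV[R]_n) (u0 u1 : R), X x0 -> X x1 ->
  let F := cchord Y c (x0, u0) (x1, u1) in
  let F' := cchord Y c (x0, F x0) (x1, F x1) in
  forall x, X x -> F x = F' x.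
Proof.
move=> _ x0 x1 u0 u1 _ _ F F' x _.
rewrite /F' /F /cchord /=.
set S := fun z : 'rV[R]_n => [set w | exists y h, [/\ Y y, - c x0 y + h <= u0,
                               - c x1 y + h <= u1 & w = - c z y + h]].
have ub0 : ubound (S x0) u0 by move=> w [y [h [_ h0 _ ->]]].
have ub1 : ubound (S x1) u1 by move=> w [y [h [_ _ h1 ->]]].
have le0 : forall y h, Y y -> - c x0 y + h <= u0 -> - c x1 y + h <= u1 ->
   - c x0 y + h <= sup (S x0).
  move=> y h Yy h0 h1; apply: (ub_le_sup (E := S x0)); first by exists u0.
  by exists y, h.
have le1 : forall y h, Y y -> - c x0 y + h <= u0 -> - c x1 y + h <= u1 ->
   - c x1 y + h <= sup (S x1).
  move=> y h Yy h0 h1; apply: (ub_le_sup (E := S x1)); first by exists u1.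
  by exists y, h.
have wit : forall y, Y y -> exists h, - c x0 y + h <= u0 /\ - c x1 y + h <= u1.
  move=> y _; exists (Num.min (u0 + c x0 y) (u1 + c x1 y)); split.
    by rewrite addrC -lerBrDr opprK ge_min lexx.
  by rewrite addrC -lerBrDr opprK ge_min lexx orbT.
have sup0 : forall y, Y y -> sup (S x0) <= u0.
  move=> y Yy; apply: ge_sup => //; have [h [h0 h1]] := wit y Yy.
  by exists (- c x0 y + h), y, h.
have sup1 : forall y, Y y -> sup (S x1) <= u1.
  move=> y Yy; apply: ge_sup => //; have [h [h0 h1]] := wit y Yy.
  by exists (- c x1 y + h), y, h.
congr sup; apply/seteqP; split => w [y [h [Yy h0 h1 ->]]]; exists y, h; split => //.
- exact: le0.
- exact: le1.
- exact: le_trans h0 (sup0 y Yy).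
- exact: le_trans h1 (sup1 y Yy).
Qed.
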